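(* Let $(p,f)$ be an SCF-RT that is rationalizable within the class of all RUM-CFs, and let $(x,y)\in D$. Put $q=p(x,y)/p(y,x)$. If $F(y,x)$ $q$-FSD $F(x,y)$, then every RUM-CF $(u,g,r)$ that rationalizes $(p,f)$ satisfies $u(x)\geq u(y)$ (i.e. $(p,f)$ reveals a preference for $x$ over $y$). If $F(y,x)$ $q$-SFSD $F(x,y)$, then every RUM-CF that rationalizes $(p,f)$ satisfies $u(x)>u(y)$ (a revealed strict preference for $x$ over $y$).
   Context: $X$ is a finite set of options; $C=\{(x,y): x,y\in X,\ x\neq y\}$; $D\subseteq C$ is a fixed non-empty set with $(x,y)\in D\Rightarrow (y,x)\in D$. A stochastic choice function (SCF) $p$ assigns to each $(x,y)\in D$ a number $p(x,y)>0$ with $p(x,y)+p(y,x)=1$ (probability of choosing $x$ from $\{x,y\}$). An SCF with response times (SCF-RT) is a pair $(p,f)$ where $p$ is an SCF and $f$ assigns to each $(x,y)\in D$ a strictly positive probability density $f(x,y)$ on $\mathbb{R}^+$ (response time density conditional on choosing $x$ from $\{x,y\}$), with cdf $F(x,y)$. A random utility model (RUM) is a pair $(u,g)$ with $u:X\to\mathbb{R}$ and $g$ assigning to each $(x,y)\in C$ a density $g(x,y)$ on $\mathbb{R}$ (cdf $G(x,y)$) such that: $\int v\,g(x,y)(v)\,dv=u(x)-u(y)$; $g(x,y)(v)=g(y,x)(-v)$ for all $v$; and the support of $g(x,y)$ is connected. A RUM with a chronometric function (RUM-CF) is a triple $(u,g,r)$ where $(u,g)$ is a RUM and $r:\mathbb{R}^{++}\to\mathbb{R}^+$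 is continuous, strictly decreasing on the set where $r(v)>0$, with $\lim_{v\to0}r(v)=\infty$ and $\lim_{v\to\infty}r(v)=0$; $r^{-1}(t)$ for $t>0$ denotes the inverse of the restriction of $r$ to $\{v: r(v)>0\}$. A RUM-CF $(u,g,r)$ rationalizes an SCF-RT $(p,f)$ if for all $(x,y)\in D$: $G(x,y)(0)=p(y,x)$, and $\frac{1-G(x,y)(r^{-1}(t))}{1-G(x,y)(0)}=F(x,y)(t)$ for all $t>0$. For cdfs $G,H$ on $\mathbb{R}^+$ and a constant $q>0$, $G$ $q$-FSD $H$ means $G(t)\leq q\,H(t)$ for all $t\geq0$; $G$ $q$-SFSD $H$ means additionally the inequality is strict for some $t$. *)

(* Defs.v *)
From HB Require Import structures.
From mathcomp Require Import all_boot all_order all_algebra.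
From mathcomp Require Import all_classical all_reals all_analysis.
Set Implicit Arguments. Unset Strict Implicit. Unset Printing Implicit Defensive.
Import Order.TTheory GRing.Theory Num.Theory.
Import numFieldNormedType.Exports.
Local Open Scope classical_set_scope.
Local Open Scope ring_scope.

Section Defs.
Variable R : realType.
Notation mu := (@lebesgue_measure R).

Definition is_density (h : R -> R) : Prop :=
  [/\ measurable_fun setT h, (forall v, 0 <= h v) &
      (\int[mu]_(v in setT) (h v)%:E = 1)%E].

Definition cdf (h : R -> R) (t : R) : R :=
  fine (\int[mu]_(v in `]-oo, t]) (h v)%:E).

Definition is_pos_density_Rplus (h : R -> R) : Prop :=
  [/\ measurable_fun (`[0%R, +oo[ : set R) h, (forall t, 0 <= t -> 0 < h t) &
      (\int[mu]_(t in `[0%R, +oo[) (h t)%:E = 1)%E].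

Definition cdf_Rplus (h : R -> R) (t : R) : R :=
  fine (\int[mu]_(s in `[0, t]) (h s)%:E).

Definition support (h : R -> R) : set R :=
  [set v : R | forall e : R, 0 < e -> (0 < \int[mu]_(w in `](v - e)%R, (v + e)%R[) (h w)%:E)%E].

Variable X : finType.

Definition is_SCF (D : X -> X -> Prop) (p : X -> X -> R) : Prop :=
  forall x y, D x y -> 0 < p x y /\ p x y + p y x = 1.

Definition is_SCF_RT (D : X -> X -> Prop) (p : X -> X -> R)
    (f : X -> X -> R -> R) : Prop :=
  is_SCF D p /\ forall x y, D x y -> is_pos_density_Rplus (f x y).

(* RUM: g defined on C = pairs of distinct options *)
Definition is_RUM (u : X -> R) (g : X -> X -> R -> R) : Prop :=
  forall x y, x <> y ->
    [/\ is_density (g x y),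
        mu.-integrable setT (fun v => (v * g x y v)%:E),
        (\int[mu]_(v in setT) (v * g x y v)%:E = (u x - u y)%:E)%E,
        (forall v, g x y v = g y x (- v)) &
        connected (support (g x y))].

Definition is_chronometric (r : R -> R) : Prop :=
  [/\ {within `]0, +oo[, continuous r},
      (forall v, 0 < v -> 0 <= r v),
      (forall v w, 0 < v -> v < w -> 0 < r v -> 0 < r w -> r w < r v),
      r v @[v --> 0^'+] --> +oo &
      r v @[v --> +oo] --> 0].

Definition is_RUM_CF (u : X -> R) (g : X -> X -> R -> R) (r : R -> R) : Prop :=
  is_RUM u g /\ is_chronometric r.

(* (u,g,r) rationalizes (p,f).  r^{-1}(t), t > 0, is the unique v > 0 with
   r v = t (v then lies in {v | r v > 0}); we quantify over such v. *)
Definition rationalizes (D : X -> X -> Prop) (u : X -> R)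
    (g : X -> X -> R -> R) (r : R -> R) (p : X -> X -> R)
    (f : X -> X -> R -> R) : Prop :=
  forall x y, D x y ->
    cdf (g x y) 0 = p y x /\
    forall t v, 0 < t -> 0 < v -> r v = t ->
      (1 - cdf (g x y) v) / (1 - cdf (g x y) 0) = cdf_Rplus (f x y) t.

Definition qFSD (q : R) (G H : R -> R) : Prop :=
  forall t, 0 <= t -> G t <= q * H t.

Definition qSFSD (q : R) (G H : R -> R) : Prop :=
  qFSD q G H /\ exists t, 0 <= t /\ G t < q * H t.

End Defs.

(* Main.v *)
From Pilot Require Import Defs.
From HB Require Import structures.
From mathcomp Require Import all_boot all_order all_algebra.
From mathcomp Require Import all_classical all_reals all_analysis.
From mathcomp Require Import measurable_realfun.
From mathcomp Require Import lra ring.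
Import Order.TTheory GRing.Theory Num.Theory.
Import numFieldNormedType.Exports.
Local Open Scope classical_set_scope.
Local Open Scope ring_scope.
Section L.
Context {R : realType}.
Local Notation mu := (@lebesgue_measure R).
Local Open Scope ereal_scope.

Definition Tl (h : R -> R) (s : R) := \int[mu]_(v in `]s, +oo[) (h v)%:E.

Lemma setT_split (s : R) : [set: R] = `]-oo, s] `|` `]s, +oo[.
Proof.
apply/seteqP; split => v //= _; rewrite !in_itv /= andbT.
by case: (leP v s) => _; [left|right].
Qed.

Lemma cdf_tail (h : R -> R) s : is_density h ->
  (1 - Pilot.Defs.cdf h s)%R = fine (Tl h s) /\ Tl h s \is a fin_num.
Proof.
case=> mh h0 h1.

move: h1; rewrite (setT_split s) ge0_integral_setU //; last 3 first.
- by rewrite -setT_split; apply/measurable_EFinP.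
- by move=> v _; rewrite lee_fin.
- apply/disj_setPS => v [] /=; rewrite !in_itv /= andbT => a b.
  by move: (le_lt_trans a b); rewrite ltxx.
set A := \int[mu]_(x in _) _; set B := \int[mu]_(x in _) _ => AB.
have A0 : 0 <= A by apply: integral_ge0 => v _; rewrite lee_fin.
have B0 : 0 <= B by apply: integral_ge0 => v _; rewrite lee_fin.
have Afin : A \is a fin_num.
  rewrite ge0_fin_numE //; apply: (@le_lt_trans _ _ 1); last exact: ltry.
  by rewrite -AB leeDl.
have Bfin : B \is a fin_num.
  rewrite ge0_fin_numE //; apply: (@le_lt_trans _ _ 1); last exact: ltry.
  by rewrite -AB leeDr.
split => //; change (1 - fine A = fine B)%R.
have AB' : (fine A + fine B)%R = 1%R by apply: EFin_inj; rewrite EFinD !fineK.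
lra.
Qed.
End L.
Section L2.
Context {R : realType}.
Local Notation mu := (@lebesgue_measure R).
Local Open Scope ereal_scope.

Lemma fubini_tail (h : R -> R) : measurable_fun setT h -> (forall v, 0 <= h v)%R ->
  \int[mu]_(v in `[0%R, +oo[) ((v * h v)%:E) = \int[mu]_(s in `]0%R, +oo[) Tl h s.
Proof.
move=> mh h0.
pose GR := measurableTypeR R.
pose A := [set p : GR * GR | (0 < p.1)%R && (p.1 < p.2)%R].
have mA : measurable A.
  rewrite (_ : A = (fun p : GR * GR => (0 < p.1)%R) @^-1` [set true] `&`
                   (fun p : GR * GR => (p.1 < p.2)%R) @^-1` [set true]); last first.
    apply/funext => p; apply/propext; rewrite /A /preimage /setI /=.
    by split; [move/andP => [-> ->] | move=> [-> ->]].
  apply: measurableI.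
  - have : measurable_fun setT (fun p : GR * GR => (0 < p.1)%R).
      by apply: measurable_fun_ltr => //; exact: measurable_fst.
    by move=> /(_ measurableT [set true]); rewrite setTI; exact.
  - have : measurable_fun setT (fun p : GR * GR => (p.1 < p.2)%R).
      by apply: measurable_fun_ltr; [exact: measurable_fst|exact: measurable_snd].
    by move=> /(_ measurableT [set true]); rewrite setTI; exact.
pose F (p : GR * GR) := ((\1_A p) * h p.2)%:E.
have mF : measurable_fun setT F.
  apply/measurable_EFinP; apply: measurable_funM; first exact: measurable_indic.
  exact: measurableT_comp mh measurable_snd.
have F0 p : 0 <= F p by rewrite lee_fin mulr_ge0.
have FT := @fubini_tonelli _ _ GR GR R mu mu F mF F0.
rewrite integral_mkcond [RHS]integral_mkcond.
transitivity (\int[mu]_v \int[mu]_s F (s, v)).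
  apply: eq_integral => v _.
  rewrite /F.
  have -> : (fun s : GR => (\1_A (s, v) * h (s, v).2)%:E) = (fun s => (\1_(`]0%R, v[ : set R) s)%:E * (h v)%:E).
    apply/funext => s; rewrite !indicE -EFinM /=; congr ((_%:R * _)%:E).
  rewrite ge0_integralZr //; try (by apply/measurable_EFinP; apply: measurable_indic);
    try (by move=> s _; rewrite lee_fin); try (by rewrite lee_fin).
  rewrite integral_indic // setIT.
  have E : (@lebesgue_measure R) (`]0%R, v[ : set R) = (if (0 < v)%R then v%:E else 0).
    by rewrite lebesgue_measure_itv /= lte_fin oppr0 adde0.
  rewrite [X in X * _](_ : _ = (if (0 < v)%R then v%:E else 0)); last exact: E.
  rewrite patchE; case: ifPn => vin; move: vin; rewrite mem_setE /= in_itv /= andbT.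
  - rewrite le_eqVlt => /predU1P [<-|v0]; first by rewrite ltxx mul0r mul0e.
    by rewrite v0 EFinM.
  - by rewrite -ltNge => v0; rewrite ltNge (ltW v0) /= mul0e.
rewrite -FT; apply: eq_integral => s _.
rewrite patchE; case: ifPn => s0.
  rewrite mem_setE /= in_itv /= andbT in s0.
  rewrite /Tl [RHS]integral_mkcond.
  congr (integral _ _ _); apply/funext => y; rewrite /F /= patchE indicE.
  have -> : ((s, y) \in A) = (s < y)%R.
    by apply/idP/idP => [|sy]; rewrite in_setE /A /=; [case/andP | rewrite s0 sy].
  have -> : (y \in `]s, +oo[%classic) = (s < y)%R by rewrite mem_setE /= in_itv /= andbT.
  by case: (s < y)%R; rewrite ?mul1r ?mul0r.
apply: integral0_eq => y _; rewrite /F indicE.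
have -> : ((s, y) \in A) = false.
  apply/negP; rewrite in_setE /A /= => /andP [sp _]; move: s0.
  by rewrite mem_setE /= in_itv /= sp.
by rewrite mul0r.
Qed.
End L2.
Section L3.
Context {R : realType}.
Local Notation mu := (@lebesgue_measure R).
Local Open Scope ereal_scope.

Lemma E_split (g1 g2 : R -> R) :
  mu.-integrable setT (fun v => (v * g1 v)%R%:E) ->
  measurable_fun setT g2 -> (forall v, 0 <= g2 v)%R -> (forall v, g1 v = g2 (- v)%R) ->
  let P1 := \int[mu]_(v in `[0%R, +oo[) (v * g1 v)%R%:E in
  let P2 := \int[mu]_(v in `[0%R, +oo[) (v * g2 v)%R%:E in
  [/\ P1 \is a fin_num, P2 \is a fin_num &
      \int[mu]_(v in setT) (v * g1 v)%R%:E = P1 - P2].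
Proof.
move=> ig1 mg2 g20 sym P1 P2.
have g10 v : (0 <= g1 v)%R by rewrite sym.
set f := fun v => (v * g1 v)%R%:E.
have Epos : \int[mu]_(v in setT) f^\+ v = P1.
  rewrite /P1 [RHS]integral_mkcond; apply: eq_integral => v _; rewrite funeposE patchE /f.
  case: ifPn => vin; move: vin; rewrite mem_setE /= in_itv /= andbT => v0.
  - by apply/max_idPl; rewrite lee_fin mulr_ge0.
  - apply/max_idPr; rewrite lee_fin; rewrite -ltNge in v0.
    by rewrite mulr_le0_ge0 // ltW.
have Eneg : \int[mu]_(v in setT) f^\- v = P2.
  transitivity (\int[mu]_(v in `]-oo, 0%R]) ((- v) * g1 v)%R%:E).
    rewrite [RHS]integral_mkcond; apply: eq_integral => v _; rewrite funenegE patchE /f.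
    rewrite mulNr EFinN.
    case: ifPn => vin; move: vin; rewrite mem_setE /= in_itv /= => v0.
    - by apply/max_idPl; rewrite lee_fin oppr_ge0 mulr_le0_ge0.
    - apply/max_idPr; rewrite lee_fin oppr_le0; rewrite -ltNge in v0.
      by rewrite mulr_ge0 // ltW.
  pose k := fun r => ((Num.max r 0) * g2 r)%R%:E.
  have mk : measurable_fun setT k.
    apply/measurable_EFinP; apply: measurable_funM => //.
    exact: measurable_maxr.
  have key := @ge0_integration_by_substitution0 R k mk.
  rewrite /P2 (_ : \int[mu]_(v in `[0%R, +oo[) _ = \int[mu]_(r in `[0%R, +oo[) k r); last first.
    apply: eq_integral => r; rewrite inE /= in_itv /= andbT => r0.
    by rewrite /k max_l.
  rewrite key; last by move=> r; rewrite lee_fin mulr_ge0 // le_max lexx orbT.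
  apply: eq_integral => r; rewrite inE /= in_itv /= => r0.
  by rewrite /k sym max_l // oppr_ge0.
rewrite integralE Epos Eneg; split => //.
- by rewrite -Epos; exact: integrable_pos_fin_num.
- by rewrite -Eneg; exact: integrable_neg_fin_num.
Qed.
End L3.
Section L4.
Context {R : realType}.
Local Notation mu := (@lebesgue_measure R).

Lemma near_right_ex (x : R) (P : R -> Prop) :
  (\forall y \near x^'+, P y) -> exists2 d, 0 < d & forall y, x < y -> y < x + d -> P y.
Proof.
rewrite near_withinE => /nbhs_ballP [e /= e0 H]; exists e => // y xy yd.
apply: H => //=; rewrite /ball /= ltr_distlC; apply/andP; split => //.
by rewrite ltrBlDr; apply: (lt_trans xy); rewrite ltrDl.
Qed.
End L4.
Section L4b.
Context {R : realType}.
Local Notation mu := (@lebesgue_measure R).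

Lemma pint_right (f : R -> R) (a : R) :
  mu.-integrable `[a, a + 1] (EFin \o f) -> forall e, 0 < e ->
  exists2 d, 0 < d & forall y, a < y -> y < a + d ->
    `|fine (\int[mu]_(t in `[a, y]) (f t)%:E)%E| < e.
Proof.
move=> intf e e0.
have aa1 : a < a + 1 by rewrite ltrDl.
have := parameterized_integral_continuous (ltW aa1) intf.
move=> /(continuous_within_itvP _ aa1) [_ cr _].
have F0 : parameterized_integral mu a a f = 0.
  by rewrite /parameterized_integral set_itv1 Rintegral_set1.
move: cr; rewrite F0 => /cvgrPdist_lt /(_ e e0) H.
have [d d0 Hd] := @near_right_ex R a _ H.
exists d => // y ay yd; have := Hd y ay yd.
by rewrite sub0r normrN.
Qed.
End L4b.
Section L5.
Context {R : realType}.

Lemma r_hits_below (r : R -> R) : is_chronometric r ->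
  forall t v, 0 < t -> 0 < v -> r v < t -> exists c, [/\ 0 < c, c <= v & r c = t].
Proof.
case=> rc r0 rdec rl0 rly t v t0 v0 rvt.
have /cvgryPgt /(_ t) H := rl0.
have [d d0 Hd] := @near_right_ex R 0 _ H.
pose a := Num.min (d / 2) (v / 2).
have a0 : 0 < a by rewrite lt_min !divr_gt0.
have ad : a < d by rewrite /a gt_min; apply/orP; left; lra.
have av : a <= v by rewrite /a ge_min; apply/orP; right; lra.
have ta : t < r a by apply: Hd; rewrite // add0r.
have rc' : {within `[a, v], continuous r}.
  apply: continuous_subspaceW rc => x /=; rewrite !in_itv /= andbT => /andP [ax _].
  exact: lt_le_trans ax.
have [c cin rct] : exists2 c, c \in `[a, v] & r c = t.
  apply: (@IVT R r a v t av rc').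
  by rewrite ge_min le_max (ltW rvt) (ltW ta) orbT.
exists c; split => //; move: cin; rewrite in_itv /= => /andP [ac cv] //.
exact: lt_le_trans ac.
Qed.

Lemma r_hits (r : R -> R) : is_chronometric r ->
  forall t, 0 < t -> exists2 v, 0 < v & r v = t.
Proof.
move=> rC t t0; have rC' := rC; case: rC' => rc r0 rdec rl0 rly.
have /cvgrPdist_lt /(_ t t0) [M [_ HM]] := rly.
pose x := Num.max M 1 + 1.
have m1 : 1 <= Num.max M 1 by rewrite le_max lexx orbT.
have mM : M <= Num.max M 1 by rewrite le_max lexx.
have x0 : 0 < x by rewrite /x; lra.
have Mx : M < x by rewrite /x; lra.
have rxt : r x < t.
  have := HM x Mx; rewrite sub0r normrN => H.
  by apply: le_lt_trans H; exact: ler_norm.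
have [c [c0 _ rct]] := @r_hits_below r rC t x t0 x0 rxt.
by exists c.
Qed.

Lemma r_zero_order (r : R -> R) : is_chronometric r ->
  forall v w, 0 < v -> r v = 0 -> 0 < w -> 0 < r w -> w < v.
Proof.
move=> rC v w v0 rv0 w0 rw0; have rC' := rC; case: rC' => rc r0 rdec rl0 rly.
rewrite ltNge; apply/negP => vw.
have t0 : 0 < r w / 2 by rewrite divr_gt0.
have rvt : r v < r w / 2 by rewrite rv0.
have [c [c0 cv rct]] := @r_hits_below r rC (r w / 2) v t0 v0 rvt.
have cw : c < w.
  rewrite lt_neqAle (le_trans cv vw) andbT; apply/negP => /eqP cw.
  by move: rct; rewrite cw => H; move: rw0; lra.
have rc0 : 0 < r c by rewrite rct.
have := rdec c w c0 cw rc0 rw0; rewrite rct => H; lra.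
Qed.
End L5.
Section L6.
Context {R : realType}.
Local Notation mu := (@lebesgue_measure R).
Local Open Scope ereal_scope.

Lemma Tl_ge0 (h : R -> R) s : (forall v, 0 <= h v)%R -> 0 <= Tl h s.
Proof. by move=> h0; apply: integral_ge0 => v _; rewrite lee_fin. Qed.

Lemma Tl_mono (h : R -> R) s s' : measurable_fun setT h -> (forall v, 0 <= h v)%R ->
  (s <= s')%R -> Tl h s' <= Tl h s.
Proof.
move=> mh h0 ss; apply: ge0_subset_integral => //.
- by apply/measurable_EFinP; exact: measurable_funTS.
- by move=> v _; rewrite lee_fin.
- by move=> v /=; rewrite !in_itv /= !andbT; apply: le_lt_trans.
Qed.

Lemma Tl_fin (h : R -> R) s : is_density h -> Tl h s \is a fin_num.
Proof. by move=> hd; case: (cdf_tail h s hd). Qed.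

Lemma Tl_measurable (h : R -> R) : is_density h -> measurable_fun setT (Tl h).
Proof.
move=> hd; have [mh h0 _] := hd.
apply: (eq_measurable_fun (EFin \o (fun s => fine (Tl h s)))).
  by move=> s _ /=; rewrite fineK //; exact: Tl_fin.
apply/measurable_EFinP; apply: nonincreasing_measurable => // a b ab.
by rewrite fine_le ?Tl_fin //; exact: Tl_mono.
Qed.

Lemma integrable_sub (h : R -> R) (A B : set R) : measurable A -> measurable B ->
  A `<=` B -> measurable_fun B h -> (forall x, B x -> 0 <= h x)%R ->
  \int[mu]_(x in B) (h x)%:E < +oo -> mu.-integrable A (EFin \o h).
Proof.
move=> mA mB AB mh h0 hfin; apply/integrableP; split.
  by apply/measurable_EFinP; exact: measurable_funS mh.
apply: le_lt_trans hfin.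
apply: (@le_trans _ _ (\int[mu]_(x in A) (h x)%:E)).
  apply: ge0_le_integral => //.
  - apply: measurableT_comp => //; apply/measurable_EFinP; exact: measurable_funS mh.
  - by apply/measurable_EFinP; exact: measurable_funS mh.
  - by move=> x Ax /=; rewrite ger0_norm //; apply: h0; exact: AB.
apply: ge0_subset_integral => //.
- by apply/measurable_EFinP.
Qed.

Lemma Tl_right (h : R -> R) v0 : is_density h -> forall e, (0 < e)%R ->
  exists2 d, (0 < d)%R & forall s, (v0 < s)%R -> (s < v0 + d)%R ->
    (fine (Tl h v0) - e < fine (Tl h s))%R.
Proof.
move=> hd e e0; have [mh h0 h1] := hd.
have intI : mu.-integrable `[v0, (v0 + 1)%R] (EFin \o h).
  apply: (@integrable_sub h _ setT) => //.
  by rewrite h1 ltry.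
have [d d0 Hd] := @pint_right R h v0 intI e e0.
exists d => // s v0s sd.
have := Hd s v0s sd.
set I := \int[mu]_(t in `[v0, s]) (h t)%:E.
have I0 : 0 <= I by apply: integral_ge0 => v _; rewrite lee_fin.
have key : Tl h v0 <= I + Tl h s.
  rewrite /Tl -ge0_integral_setU //; last 3 first.
  - by apply/measurable_EFinP; exact: measurable_funTS.
  - by move=> v _; rewrite lee_fin.
  - apply/disj_setPS => v [] /=; rewrite !in_itv /= andbT => /andP [_ a] b.
    by move: (le_lt_trans a b); rewrite ltxx.
  apply: ge0_subset_integral => //.
  - by apply: measurableU.
  - by apply/measurable_EFinP; exact: measurable_funTS.
  - by move=> v _; rewrite lee_fin.
  - move=> v /=; rewrite !in_itv /= !andbT => v0v.
    by case: (leP v s) => vs; [left; rewrite (ltW v0v) | right].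
have Ifin : I \is a fin_num.
  rewrite ge0_fin_numE //; apply: (@le_lt_trans _ _ (\int[mu]_v (h v)%:E)); last by rewrite h1 ltry.
  apply: ge0_subset_integral => //; first by apply/measurable_EFinP.
  by move=> v _; rewrite lee_fin.
have Ts := Tl_fin h s hd; have Tv0 := Tl_fin h v0 hd.
move=> HI.
have key' : (fine (Tl h v0) <= fine I + fine (Tl h s))%R.
  by rewrite -lee_fin EFinD !fineK.
have I0' : (0 <= fine I)%R by apply: fine_ge0.
rewrite ger0_norm in HI => //; lra.
Qed.
End L6.
Section L7.
Context {R : realType} {X : finType}.
Local Notation mu := (@lebesgue_measure R).

Definition Pint (h : R -> R) := (\int[mu]_(v in `[0%R, +oo[) ((v * h v)%R)%:E)%E.

Lemma main_aux (D : X -> X -> Prop) (p : X -> X -> R) (f : X -> X -> R -> R)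
  (x y : X) (u : X -> R) (g : X -> X -> R -> R) (r : R -> R) :
  D x y -> D y x -> x <> y -> y <> x -> is_SCF_RT D p f -> is_RUM_CF u g r ->
  rationalizes D u g r p f ->
  [/\ Pint (g x y) \is a fin_num, Pint (g y x) \is a fin_num,
      ((u x - u y)%:E = Pint (g x y) - Pint (g y x))%E,
      Pint (g x y) = (\int[mu]_(s in `]0%R, +oo[) Tl (g x y) s)%E &
      Pint (g y x) = (\int[mu]_(s in `]0%R, +oo[) Tl (g y x) s)%E] /\
      forall t v, 0 < t -> 0 < v -> r v = t ->
        fine (Tl (g x y) v) = p x y * cdf_Rplus (f x y) t /\
        fine (Tl (g y x) v) = p y x * cdf_Rplus (f y x) t.
Proof.
move=> Dxy Dyx nxy nyx [Hscf Hfd] [Hrum Hchr] Hrt.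
have [dxy ixy Exy symxy _] := Hrum x y nxy.
have [dyx iyx Eyx symyx _] := Hrum y x nyx.
have [mgyx gyx0 _] := dyx; have [mgxy gxy0 _] := dxy.
have [F1 F2 E] := E_split (g x y) (g y x) ixy mgyx gyx0 symxy.
have [pxy0 psum] := Hscf x y Dxy; have [pyx0 _] := Hscf y x Dyx.
have [c0xy Hxy] := Hrt x y Dxy; have [c0yx Hyx] := Hrt y x Dyx.
split; first split => //.
- by rewrite -Exy E.
- exact: fubini_tail.
- exact: fubini_tail.
move=> t v t0 v0 rv; split.
- have [T1 _] := cdf_tail (g x y) v dxy.
  have := Hxy t v t0 v0 rv; rewrite c0xy (_ : 1 - p y x = p x y); last lra.
  by move=> <-; rewrite -T1 mulrC divfK // gt_eqF.
- have [T1 _] := cdf_tail (g y x) v dyx.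
  have := Hyx t v t0 v0 rv; rewrite c0yx (_ : 1 - p x y = p y x); last lra.
  by move=> <-; rewrite -T1 mulrC divfK // gt_eqF.
Qed.
End L7.
Section L8.
Context {R : realType} {X : finType}.
Local Notation mu := (@lebesgue_measure R).

Lemma cdfR_ge0 (h : R -> R) t : (forall s, 0 <= s -> 0 <= h s) -> 0 <= cdf_Rplus h t.
Proof.
move=> h0; apply: fine_ge0; apply: integral_ge0 => s; rewrite /= in_itv /= => /andP [s0 _].
by rewrite lee_fin h0.
Qed.

Lemma pos_density_int (h : R -> R) : is_pos_density_Rplus h ->
  mu.-integrable `[0, 0 + 1] (EFin \o h).
Proof.
case=> mh h0 h1; apply: (@integrable_sub R h _ `[0%R, +oo[) => //.
- by move=> s /=; rewrite !in_itv /= andbT => /andP [].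
- by move=> s /=; rewrite in_itv /= andbT => /h0 /ltW.
- by rewrite h1 ltry.
Qed.

Lemma K_aux (D : X -> X -> Prop) (p : X -> X -> R) (f : X -> X -> R -> R)
  (x y : X) (u : X -> R) (g : X -> X -> R -> R) (r : R -> R) :
  D x y -> D y x -> x <> y -> y <> x -> is_SCF_RT D p f -> is_RUM_CF u g r ->
  rationalizes D u g r p f ->
  qFSD (p x y / p y x) (cdf_Rplus (f y x)) (cdf_Rplus (f x y)) ->
  forall s, 0 < s -> (Tl (g y x) s <= Tl (g x y) s)%E.
Proof.
move=> Dxy Dyx nxy nyx Hpf Hrc Hrt FSD s s0.
have [_ tails] := main_aux D p f x y u g r Dxy Dyx nxy nyx Hpf Hrc Hrt.
have [Hscf Hfd] := Hpf; have [Hrum Hchr] := Hrc.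
have [dxy _ _ _ _] := Hrum x y nxy; have [dyx _ _ _ _] := Hrum y x nyx.
have [mgyx gyx0 _] := dyx; have [mgxy gxy0 _] := dxy.
have [pxy0 psum] := Hscf x y Dxy; have [pyx0 _] := Hscf y x Dyx.
have [fxy_m fxy0 _] := Hfd x y Dxy; have [fyx_m fyx0 _] := Hfd y x Dyx.
have fxy0' t : 0 <= t -> 0 <= f x y t by move=> t0; apply/ltW/fxy0.
have fyx0' t : 0 <= t -> 0 <= f y x t by move=> t0; apply/ltW/fyx0.
rewrite -(fineK (Tl_fin (g y x) s dyx)) -(fineK (Tl_fin (g x y) s dxy)) lee_fin.
have [_ rnn _ _ _] := Hchr.
have := rnn s s0; rewrite le_eqVlt => /predU1P [rs0|rs].
- apply: (@le_trans _ _ 0); last by apply: fine_ge0; apply: Tl_ge0.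
  rewrite leNgt; apply/negP => bpos.
  have [d d0 Hd] := @pint_right R (f y x) 0 (pos_density_int (f y x) (Hfd y x Dyx)) _ bpos.
  have t0 : 0 < d / 2 by rewrite divr_gt0.
  have td : d / 2 < 0 + d by rewrite add0r; lra.
  have := Hd (d / 2) t0 td.
  have [w w0 rwt] := r_hits r Hchr (d / 2) t0.
  have rw0 : 0 < r w by rewrite rwt.
  have ws := r_zero_order r Hchr s w s0 (esym rs0) w0 rw0.
  have bsw : fine (Tl (g y x) s) <= fine (Tl (g y x) w).
    by rewrite fine_le ?Tl_fin //; apply: Tl_mono => //; exact: ltW.
  have [_ bw] := tails _ _ t0 w0 rwt.
  have Fge0 := cdfR_ge0 (f y x) (d / 2) fyx0'.
  rewrite -/(cdf_Rplus (f y x) (d / 2)) ger0_norm // => HF.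
  have : p y x * cdf_Rplus (f y x) (d / 2) <= cdf_Rplus (f y x) (d / 2).
    by apply: ler_piMl => //; lra.
  lra.
- have [A B] := tails _ _ rs s0 erefl.
  rewrite A B.
  have := FSD (r s) (ltW rs) => H.
  have e : p y x * (p x y / p y x * cdf_Rplus (f x y) (r s)) = p x y * cdf_Rplus (f x y) (r s).
    by field; rewrite gt_eqF.
  rewrite -e; apply: ler_wpM2l => //; exact: ltW.
Qed.
End L8.
Theorem theorem1 (R : realType) (X : finType) (D : X -> X -> Prop)
  (HDC : forall x y, D x y -> x <> y)
  (HDsym : forall x y, D x y -> D y x)
  (HDne : exists x y, D x y)
  (p : X -> X -> R) (f : X -> X -> R -> R)
  (Hpf : is_SCF_RT D p f)
  (Hrat : exists (u : X -> R) (g : X -> X -> R -> R) (r : R -> R),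
            is_RUM_CF u g r /\ rationalizes D u g r p f)
  (x y : X) (Hxy : D x y) :
  let q := p x y / p y x in
  (qFSD q (cdf_Rplus (f y x)) (cdf_Rplus (f x y)) ->
     forall (u : X -> R) (g : X -> X -> R -> R) (r : R -> R),
       is_RUM_CF u g r -> rationalizes D u g r p f -> u y <= u x) /\
  (qSFSD q (cdf_Rplus (f y x)) (cdf_Rplus (f x y)) ->
     forall (u : X -> R) (g : X -> X -> R -> R) (r : R -> R),
       is_RUM_CF u g r -> rationalizes D u g r p f -> u y < u x).
Proof.
move=> q.
have nxy := HDC x y Hxy; have Dyx := HDsym x y Hxy.
have nyx : y <> x by move=> e; apply: nxy.
have [Hscf Hfd] := Hpf.
have [pxy0 psum] := Hscf x y Hxy; have [pyx0 _] := Hscf y x Dyx.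
split.
- move=> FSD u g r Hrc Hrt.
  have [[F1 F2 E P1e P2e] _] := main_aux D p f x y u g r Hxy Dyx nxy nyx Hpf Hrc Hrt.
  have K := K_aux D p f x y u g r Hxy Dyx nxy nyx Hpf Hrc Hrt FSD.
  have [Hrum _] := Hrc.
  have [dxy _ _ _ _] := Hrum x y nxy; have [dyx _ _ _ _] := Hrum y x nyx.
  have [_ gyx0 _] := dyx.
  have le : (Pint (g y x) <= Pint (g x y))%E.
    rewrite P1e P2e; apply: ge0_le_integral => //.
    - by move=> s _; apply: Tl_ge0.
    - exact: measurable_funTS (Tl_measurable (g y x) dyx).
    - exact: measurable_funTS (Tl_measurable (g x y) dxy).
    - by move=> s; rewrite /= in_itv /= andbT => s0; exact: K.
  have E' : u x - u y = fine (Pint (g x y)) - fine (Pint (g y x)).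
    by apply: EFin_inj; rewrite E EFinB !fineK.
  have := fine_le F2 F1 le; lra.
- move=> [FSD [t0 [t00 St]]] u g r Hrc Hrt.
  have [[F1 F2 E P1e P2e] tails] := main_aux D p f x y u g r Hxy Dyx nxy nyx Hpf Hrc Hrt.
  have K := K_aux D p f x y u g r Hxy Dyx nxy nyx Hpf Hrc Hrt FSD.
  have [Hrum Hchr] := Hrc.
  have [dxy _ _ _ _] := Hrum x y nxy; have [dyx _ _ _ _] := Hrum y x nyx.
  have [mgyx gyx0 _] := dyx; have [mgxy gxy0 _] := dxy.
  have c0 (h : R -> R) : cdf_Rplus h 0 = 0.
    by rewrite /cdf_Rplus set_itv1; exact: (Rintegral_set1 h 0).
  have t0pos : 0 < t0.
    rewrite lt_neqAle t00 andbT; apply/eqP => e; move: St; rewrite -e !c0 mulr0.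
    by rewrite ltxx.
  have [v0 v00 rv0] := r_hits r Hchr t0 t0pos.
  have [A B] := tails t0 v0 t0pos v00 rv0.
  set a0 := fine (Tl (g x y) v0); set b0 := fine (Tl (g y x) v0).
  have ab : b0 < a0.
    rewrite /a0 /b0 A B.
    have e : p y x * (p x y / p y x * cdf_Rplus (f x y) t0) = p x y * cdf_Rplus (f x y) t0.
      by field; rewrite gt_eqF.
    by rewrite -e ltr_pM2l.
  pose dl := (a0 - b0) / 2.
  have dl0 : 0 < dl by rewrite /dl divr_gt0 // subr_gt0.
  have [d d0 Hd] := Tl_right (g x y) v0 dxy dl dl0.
  pose I : set R := `]v0, (v0 + d)%R[%classic.
  have pt : forall s, `]0%R, +oo[%classic s ->
      (Tl (g y x) s + (dl * \1_I s)%:E <= Tl (g x y) s)%E.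
    move=> s; rewrite /= in_itv /= andbT => s0.
    rewrite indicE; case: (boolP (s \in I)) => sI.
    + move: (sI); rewrite mem_setE /= in_itv /= => /andP [v0s sd].
      have := Hd s v0s sd => H1.
      have H2 : fine (Tl (g y x) s) <= b0.
        by rewrite /b0 fine_le ?Tl_fin //; apply: Tl_mono => //; exact: ltW.
      rewrite -(fineK (Tl_fin (g y x) s dyx)) -(fineK (Tl_fin (g x y) s dxy)) -EFinD lee_fin.
      rewrite mulr1 -/a0 in H1 *; rewrite /dl in H1 *; lra.
    + by rewrite mulr0 adde0; exact: K.
  have mI : measurable I by exact: measurable_itv.
  have intI : (\int[lebesgue_measure]_(s in `]0%R, +oo[) (dl * \1_I s)%:E = (dl * d)%:E)%E.
    under eq_integral do rewrite EFinM.
    rewrite ge0_integralZl //; try (by apply/measurable_EFinP; exact: measurable_indic);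
      try (by move=> s _; rewrite lee_fin); try (by rewrite lee_fin ltW).
    rewrite integral_indic //.
    have -> : I `&` `]0%R, +oo[ = I.
      apply/setIidl => s /=; rewrite !in_itv /= andbT => /andP [v0s _].
      exact: lt_trans v0s.
    have mId : (@lebesgue_measure R) I = d%:E.
      by rewrite /I lebesgue_measure_itv /= lte_fin ltrDl d0 -EFinD addrAC subrr add0r.
    rewrite [X in (_ * X)%E](_ : _ = d%:E); last exact: mId.
    by rewrite EFinM.
  have ge : (Pint (g y x) + (dl * d)%:E <= Pint (g x y))%E.
    rewrite P1e P2e -intI -ge0_integralD //; last 4 first.
    - by move=> s _; apply: Tl_ge0.
    - exact: measurable_funTS (Tl_measurable (g y x) dyx).
    - by move=> s _; rewrite lee_fin mulr_ge0 // ltW.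
    - by apply/measurable_EFinP; apply: measurable_funM => //; exact: measurable_indic.
    apply: ge0_le_integral => //.
    - by move=> s _; rewrite adde_ge0 // ?Tl_ge0 // lee_fin mulr_ge0 // ltW.
    - apply: emeasurable_funD.
      + exact: measurable_funTS (Tl_measurable (g y x) dyx).
      + by apply/measurable_EFinP; apply: measurable_funM => //; exact: measurable_indic.
    - exact: measurable_funTS (Tl_measurable (g x y) dxy).
  have E' : u x - u y = fine (Pint (g x y)) - fine (Pint (g y x)).
    by apply: EFin_inj; rewrite E EFinB !fineK.
  move: ge; rewrite -(fineK F1) -(fineK F2) -EFinD lee_fin => ge.
  have : 0 < dl * d by rewrite mulr_gt0.
  lra.
Qed.
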